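(* For every positive integer $r$ there is a ReLU network with two input units, all of whose weights lie in $\{\frac12,-\frac12\}$, implementing a function $\times':\mathbb{R}^2\to\mathbb{R}$ such that: (i) $\times'(x,y)=0$ whenever $x=0$ or $y=0$; (ii) $|\times'(x,y)-xy|\le 6\cdot 2^{-2(r+1)}$ for all $x,y\in[-1,1]$; (iii) the depth is $\mathcal{O}(r)$; (iv) the width is bounded by a constant independent of $r$; (v) the number of weights is $\mathcal{O}(r)$.
   Context: A ReLU network is a feedforward network with activation $\sigma(x)=\max(0,x)$ in which each unit connects only to units in the next layer; depth is the number of layers and width the maximum number of units in a layer. *)

(* Defs.v *)
From HB Require Import structures.
From mathcomp Require Import all_boot all_order all_algebra.
From mathcomp Require Import reals.
Set Implicit Arguments. Unset Strict Implicit. Unset Printing Implicit Defensive.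
Import Order.TTheory GRing.Theory Num.Theory.
Local Open Scope ring_scope.

(* A zero entry of a weight
   matrix / bias vector means that the connection / bias is absent. *)
Inductive relu_net (R : realType) : nat -> nat -> Type :=
| Out : forall n m, 'M[R]_(m, n) -> 'cV[R]_m -> relu_net R n m
| Hidden : forall n k m, 'M[R]_(k, n) -> 'cV[R]_k -> relu_net R k m ->
    relu_net R n m.

Definition relu (R : realType) (x : R) : R := Num.max 0 x.

Fixpoint net_eval (R : realType) n m (N : relu_net R n m) : 'cV[R]_n -> 'cV[R]_m :=
  match N in relu_net _ n m return 'cV[R]_n -> 'cV[R]_m with
  | Out _ _ W b => fun x => W *m x + b
  | Hidden _ _ _ W b N' => fun x => net_eval N' (map_mx (@relu R) (W *m x + b))
  end.

(* depth = number of layers (input layer, hidden layers, output layer) *)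
Fixpoint net_depth (R : realType) n m (N : relu_net R n m) : nat :=
  match N with
  | Out _ _ _ _ => 2
  | Hidden _ _ _ _ _ N' => (net_depth N').+1
  end.

Fixpoint net_width (R : realType) n m (N : relu_net R n m) : nat :=
  match N with
  | Out n m _ _ => maxn n m
  | Hidden n _ _ _ _ N' => maxn n (net_width N')
  end.

Definition mx_nnz (R : realType) p q (A : 'M[R]_(p, q)) : nat :=
  #|[set ij : 'I_p * 'I_q | A ij.1 ij.2 != 0]|.

Fixpoint net_nweights (R : realType) n m (N : relu_net R n m) : nat :=
  match N with
  | Out _ _ W b => mx_nnz W + mx_nnz b
  | Hidden _ _ _ W b N' => mx_nnz W + mx_nnz b + net_nweights N'
  end.

Definition mx_all (R : realType) p q (P : R -> Prop) (A : 'M[R]_(p, q)) : Prop :=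
  forall i j, P (A i j).

Definition half_weight (R : realType) (w : R) : Prop :=
  w = 0 \/ w = 2^-1 \/ w = - 2^-1.

Fixpoint net_weights_in (R : realType) (P : R -> Prop) n m (N : relu_net R n m) : Prop :=
  match N with
  | Out _ _ W b => mx_all P W /\ mx_all P b
  | Hidden _ _ _ W b N' => [/\ mx_all P W, mx_all P b & net_weights_in P N']
  end.

Definition net_fun2 (R : realType) (N : relu_net R 2 1) (x y : R) : R :=
  net_eval N (\col_(i < 2) (if i == ord0 then x else y)) ord0 ord0.

(* Main.v *)
Require Import Defs.
From HB Require Import structures.
From mathcomp Require Import all_boot all_order all_algebra.
From mathcomp Require Import reals.
From mathcomp Require Import ring lra zify.
Set Implicit Arguments. Unset Strict Implicit. Unset Printing Implicit Defensive.
Import Order.TTheory GRing.Theory Num.Theory.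
Local Open Scope ring_scope.

Fixpoint nltb (m n : nat) : bool :=
  match m, n with _, 0 => false | 0, S _ => true | S m, S n => nltb m n end.

Section S.
Variable R : realType.

Fixpoint sumN (F : nat -> R) (n : nat) : R :=
  match n with 0 => 0 | S n => sumN F n + F n end.

Definition colN n (f : nat -> R) : 'cV[R]_n := \col_(i < n) f i.
Definition mxN p q (f : nat -> nat -> R) : 'M[R]_(p,q) := \matrix_(i < p, j < q) f i j.

Lemma sumN_big n (F : nat -> R) : \sum_(j < n) F j = sumN F n.
Proof. by elim: n => [|n IH]; rewrite ?big_ord0 // big_ord_recr /= IH. Qed.

Lemma mul_mxN_colN p q f g : mxN p q f *m colN q g = colN p (fun i => sumN (fun j => f i j * g j) q).
Proof.
apply/matrixP => i k; rewrite !mxE -sumN_big; apply: eq_bigr => j _; by rewrite !mxE.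
Qed.

Lemma add_colN p f g : colN p f + colN p g = colN p (fun i => f i + g i).
Proof. by apply/matrixP => i k; rewrite !mxE. Qed.

Lemma map_colN p f : map_mx (@relu R) (colN p f) = colN p (fun i => relu (f i)).
Proof. by apply/matrixP => i k; rewrite !mxE. Qed.

Lemma eq_colN p f g : (forall i, (i < p)%N -> f i = g i) -> colN p f = colN p g.
Proof. by move=> h; apply/matrixP => i k; rewrite !mxE h. Qed.

Definition hw (c : nat) : R := match c with 1 => 2^-1 | 2 => - 2^-1 | _ => 0 end.
Lemma hw0 : hw 0 = 0. Proof. by []. Qed.

Definition cB1 (j k : nat) : nat :=
  match j, k with
  | 0, 0 | 1, 0 => 1
  | 2, 0 | 3, 0 | 4, 0 | 5, 0 => 1
  | 2, 1 | 3, 1 | 4, 1 | 5, 1 => 2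
  | 6, 1 => 1
  | 7, 2 | 7, 3 | 8, 2 | 8, 3 => 1
  | _, _ => 0 end.
Definition cA1 (i j : nat) : nat :=
  match i, j with
  | 0, 0 | 0, 1 => 1
  | 0, 2 | 0, 3 | 0, 4 | 0, 5 => 2
  | 1, 6 => 1
  | 2, 7 | 2, 8 | 3, 7 | 3, 8 => 1
  | 2, 0 | 2, 1 | 3, 0 | 3, 1 => 2
  | 2, 2 | 2, 3 | 2, 4 | 2, 5 | 3, 2 | 3, 3 | 3, 4 | 3, 5 => 1
  | _, _ => 0 end.

Definition cB (j k : nat) : R := hw
  (if nltb j 9 then (if nltb k 4 then cB1 j k else 0)
  else if nltb k 4 then 0 else cB1 (Nat.sub j 9) (Nat.sub k 4)).
Definition cA (i j : nat) : R := hw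
  (if nltb i 4 then (if nltb j 9 then cA1 i j else 0)
  else if nltb j 9 then 0 else cA1 (Nat.sub i 4) (Nat.sub j 9)).

Definition WB : 'M[R]_(18, 8) := mxN 18 8 cB.
Definition WA : 'M[R]_(8, 18) := mxN 8 18 cA.
Definition z18 : 'cV[R]_18 := colN 18 (fun _ => 0).
Definition z8 : 'cV[R]_8 := colN 8 (fun _ => 0).

Definition trip := (R * R * R)%type.
Definition stf (a b : trip) (i : nat) : R :=
  match i with
  | 0 => a.1.1 | 1 => a.1.2 | 2 => a.2 | 3 => a.2
  | 4 => b.1.1 | 5 => b.1.2 | 6 => b.2 | _ => b.2 end.
Definition stA a b := colN 8 (stf a b).


Lemma congr_relu (x y : R) : x = y -> relu x = relu y.
Proof. by move->. Qed.

Definition bf1 (a : trip) (j : nat) : R :=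
  let: (w, k, F) := a in
  match j with
  | 0 | 1 => relu (2^-1 * w)
  | 2 | 3 | 4 | 5 => relu (2^-1 * w - 2^-1 * k)
  | 6 => relu (2^-1 * k)
  | _ => relu F end.
Definition bf (a b : trip) (j : nat) : R :=
  if nltb j 9 then bf1 a j else bf1 b (Nat.sub j 9).

Lemma B_layer a b : map_mx (@relu R) (WB *m stA a b + z18) = colN 18 (bf a b).
Proof.
rewrite /WB /stA /z18 mul_mxN_colN add_colN map_colN.
apply: eq_colN => i hi; case: a => [[w k] F]; case: b => [[w' k'] F'].
case: i hi => [|[|[|[|[|[|[|[|[|[|[|[|[|[|[|[|[|[|i]]]]]]]]]]]]]]]]]] hi //.
all: rewrite ?/cB ?/cA ?/cH ?/bHf ?/cA0; cbn [sumN cB cB1 hw nltb Nat.sub stf bf bf1 fst snd]; rewrite ?hw0.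
all: apply: congr_relu; lra.
Qed.

Definition phi (a : trip) : trip :=
  let: (w, k, F) := a in
  let p := relu (2^-1 * w) in
  let q := relu (2^-1 * w - 2^-1 * k) in
  let kk := relu (2^-1 * k) in
  let G := relu F in
  (relu (p - 2 * q), relu (2^-1 * kk), relu (G - p + 2 * q)).

Lemma A_layer a b : map_mx (@relu R) (WA *m colN 18 (bf a b) + z8) = stA (phi a) (phi b).
Proof.
rewrite /WA /stA /z8 mul_mxN_colN add_colN map_colN.
apply: eq_colN => i hi; case: a => [[w k] F]; case: b => [[w' k'] F'].
case: i hi => [|[|[|[|[|[|[|[|i]]]]]]]] hi //.
all: rewrite ?/cB ?/cA ?/cH ?/bHf ?/cA0; cbn [sumN cA cA1 hw nltb Nat.sub stf bf bf1 fst snd phi]; rewrite ?hw0.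
all: apply: congr_relu; lra.
Qed.


Definition cH (i j : nat) : R := hw
  match i, j with
  | 0, 0 | 0, 1 | 1, 0 | 1, 1 => 1
  | 2, 0 | 2, 1 | 3, 0 | 3, 1 => 2
  | 6, 0 | 7, 0 | 8, 1 | 9, 1 => 1
  | 6, 1 | 7, 1 | 8, 0 | 9, 0 => 2
  | _, _ => 0 end.
Definition bHf (i : nat) : R := hw
  match i with 4 | 5 | 10 | 11 => 1 | _ => 0 end.
Definition WH : 'M[R]_(12, 2) := mxN 12 2 cH.
Definition bH : 'cV[R]_12 := colN 12 bHf.

Definition h1 (x z : R) (i : nat) : R :=
  match i with
  | 0 | 1 => relu (2^-1 * x + 2^-1 * z)
  | 2 | 3 => relu (- (2^-1 * x) - 2^-1 * z)
  | _ => relu (2^-1) end.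
Definition hf (x y : R) (i : nat) : R :=
  if nltb i 6 then h1 x y i else h1 x (- y) (Nat.sub i 6).

Definition inp (x y : R) : 'cV[R]_2 := \col_(i < 2) (if i == ord0 then x else y).

Lemma inpE x y : inp x y = colN 2 (fun i => match i with 0 => x | _ => y end).
Proof. by apply/matrixP => i k; rewrite !mxE; case: i => [[|[|i]] hi]. Qed.

Lemma H_layer x y : map_mx (@relu R) (WH *m inp x y + bH) = colN 12 (hf x y).
Proof.
rewrite inpE /WH /bH mul_mxN_colN add_colN map_colN.
apply: eq_colN => i hi.
case: i hi => [|[|[|[|[|[|[|[|[|[|[|[|i]]]]]]]]]]]] hi //.
all: rewrite ?/cB ?/cA ?/cH ?/bHf ?/cA0; cbn [sumN cH bHf hw nltb Nat.sub hf h1]; rewrite ?hw0.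
all: apply: congr_relu; lra.
Qed.

Definition cA0 (i j : nat) : R := hw
  match i, j with
  | 0, 0 | 0, 1 | 0, 2 | 0, 3 => 1
  | 1, 4 | 1, 5 => 1
  | 2, 0 | 2, 1 | 2, 2 | 2, 3 | 3, 0 | 3, 1 | 3, 2 | 3, 3 => 1
  | 4, 6 | 4, 7 | 4, 8 | 4, 9 => 1
  | 5, 10 | 5, 11 => 1
  | 6, 6 | 6, 7 | 6, 8 | 6, 9 | 7, 6 | 7, 7 | 7, 8 | 7, 9 => 1
  | _, _ => 0 end.
Definition WA0 : 'M[R]_(8, 12) := mxN 8 12 cA0.

Definition T0 (u : R) : trip := (`|u| / 2, 2^-1, `|u| / 2).

Lemma relu_pos (x : R) : 0 <= x -> relu x = x.
Proof. by move=> h; rewrite /relu; apply/max_idPr. Qed.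
Lemma relu_neg (x : R) : x <= 0 -> relu x = 0.
Proof. by move=> h; rewrite /relu; apply/max_idPl. Qed.

Lemma relu_eq (E V : R) : 0 <= V -> E = V -> relu E = V.
Proof. by move=> h ->; rewrite relu_pos. Qed.

Lemma relu_abs (x z : R) :
  relu (2^-1 * x + 2^-1 * z) + relu (- (2^-1 * x) - 2^-1 * z) = `|x + z| / 2.
Proof.
case: (lerP 0 (x + z)) => h.
  rewrite relu_pos ?relu_neg ?ger0_norm //; lra.
rewrite relu_neg ?relu_pos ?ltr0_norm //; lra.
Qed.

Lemma A0_layer x y : map_mx (@relu R) (WA0 *m colN 12 (hf x y) + z8) = stA (T0 (x + y)) (T0 (x - y)).
Proof.
rewrite /WA0 /stA /z8 mul_mxN_colN add_colN map_colN.
apply: eq_colN => i hi.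
have e1 := relu_abs x y; have e2 := relu_abs x (- y).
have n1 : 0 <= `|x + y| / 2 by rewrite divr_ge0 // normr_ge0.
have n2 : 0 <= `|x - y| / 2 by rewrite divr_ge0 // normr_ge0.
have c : relu (2^-1 : R) = 2^-1 by rewrite relu_pos // invr_ge0 ler0n.
case: i hi => [|[|[|[|[|[|[|[|i]]]]]]]] hi //.
all: rewrite ?/cB ?/cA ?/cH ?/bHf ?/cA0; cbn [sumN cA0 hw nltb Nat.sub hf h1 stf T0 fst snd]; rewrite ?hw0.
all: rewrite ?c.
all: apply: relu_eq; [ try (by rewrite invr_ge0 ler0n); done | lra].
Qed.

Definition cO (i j : nat) : R := hw
  match j with 2 | 3 => 1 | 6 | 7 => 2 | _ => 0 end.
Definition WO : 'M[R]_(1, 8) := mxN 1 8 cO.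
Definition z1 : 'cV[R]_1 := colN 1 (fun _ => 0).

Lemma O_layer a b : WO *m stA a b + z1 = colN 1 (fun _ => a.2 - b.2).
Proof.
rewrite /WO /stA /z1 mul_mxN_colN add_colN.
apply: eq_colN => i hi; case: a => [[w k] F]; case: b => [[w' k'] F'].
case: i hi => [|i] hi //.
rewrite /cO; cbn [sumN cO hw stf fst snd]; rewrite ?hw0; lra.
Qed.

Fixpoint iterN (m : nat) : relu_net R 8 1 :=
  match m with 0 => Out WO z1 | m.+1 => Hidden WB z18 (Hidden WA z8 (iterN m)) end.
Definition net (m : nat) : relu_net R 2 1 := Hidden WH bH (Hidden WA0 z8 (iterN m)).

Lemma iterN_eval m a b : net_eval (iterN m) (stA a b) =
  colN 1 (fun _ => (iter m phi a).2 - (iter m phi b).2).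
Proof.
elim: m a b => [|m IH] a b /=; first exact: O_layer.
by rewrite B_layer A_layer IH -!iterSr.
Qed.

Lemma net_funE m x y : net_fun2 (net m) x y =
  (iter m phi (T0 (x + y))).2 - (iter m phi (T0 (x - y))).2.
Proof.
rewrite /net_fun2 /= -/(inp x y) H_layer A0_layer iterN_eval /colN.
by rewrite mxE.
Qed.


Definition g (v : R) : R := if v <= 2^-1 then 2 * v else 2 - 2 * v.

Lemma g01 v : 0 <= v <= 1 -> 0 <= g v <= 1.
Proof. rewrite /g => /andP[h0 h1]; case: ifP => h; apply/andP; split; lra. Qed.

Lemma phi_inv (T lam v : R) : 0 <= T -> 0 <= lam -> 0 <= v <= 1 ->
  phi (lam * v, lam / 2, T + lam * (v - v ^+ 2)) =
  (lam * 4^-1 * g v, lam * 4^-1 / 2, T + lam * 4^-1 * (g v - g v ^+ 2)).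
Proof.
move=> hT hl /andP[h0 h1].
have hv : 0 <= v - v ^+ 2 by rewrite expr2; nra.
have hF : 0 <= T + lam * (v - v ^+ 2) by have := mulr_ge0 hl hv; lra.
have hlv : 0 <= lam * v by exact: mulr_ge0.
rewrite /phi /g.
rewrite (relu_pos hF) (relu_pos (_ : 0 <= 2^-1 * (lam * v))); last by lra.
rewrite (relu_pos (_ : 0 <= 2^-1 * (lam / 2))); last by lra.
rewrite (relu_pos (_ : 0 <= 2^-1 * (2^-1 * (lam / 2)))); last by lra.
case: ifP => hv2.
  rewrite (relu_neg (_ : 2^-1 * (lam * v) - 2^-1 * (lam / 2) <= 0)); last by nra.
  congr (_, _, _).
  - apply: relu_eq; first by nra.
    lra.
  - lra.
  - apply: relu_eq.
      have : 0 <= lam * 4^-1 * (2 * v - (2 * v) ^+ 2).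
        apply: mulr_ge0; first lra. rewrite expr2; nra.
      lra.
    rewrite !expr2; nra.
move/negbT: hv2; rewrite -ltNge => hv2.
rewrite (relu_pos (_ : 0 <= 2^-1 * (lam * v) - 2^-1 * (lam / 2))); last by nra.
congr (_, _, _).
- apply: relu_eq; first by nra.
  lra.
- lra.
- apply: relu_eq.
    have : 0 <= lam * 4^-1 * ((2 - 2 * v) - (2 - 2 * v) ^+ 2).
      apply: mulr_ge0; first lra. rewrite expr2; nra.
    lra.
  rewrite !expr2; nra.
Qed.

Lemma iter_inv (t : R) s : 0 <= t <= 1 ->
  iter s phi (t, 2^-1, t) =
  ((4^-1) ^+ s * iter s g t, (4^-1) ^+ s / 2,
   t ^+ 2 + (4^-1) ^+ s * (iter s g t - (iter s g t) ^+ 2))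
  /\ 0 <= iter s g t <= 1.
Proof.
move=> ht; elim: s => [|s [IH Hv]].
  split=> //=; rewrite expr0 !mul1r; congr (_, _, _); lra.
split; last by rewrite iterS; apply: g01.
rewrite iterS IH phi_inv //.
- by rewrite !exprSr iterS.
- by rewrite sqr_ge0.
- by rewrite exprn_ge0 // invr_ge0 ler0n.
Qed.


Lemma err_bound r (x y : R) : -1 <= x <= 1 -> -1 <= y <= 1 ->
  `|net_fun2 (net r) x y - x * y| <= (4^-1) ^+ r * 4^-1.
Proof.
move=> /andP[hx1 hx2] /andP[hy1 hy2].
rewrite net_funE /T0.
have ht1 : 0 <= `|x + y| / 2 <= 1.
  apply/andP; split; first by rewrite divr_ge0 ?normr_ge0.
  have : `|x + y| <= 2 by rewrite ler_norml; apply/andP; split; lra.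
  lra.
have ht2 : 0 <= `|x - y| / 2 <= 1.
  apply/andP; split; first by rewrite divr_ge0 ?normr_ge0.
  have : `|x - y| <= 2 by rewrite ler_norml; apply/andP; split; lra.
  lra.
have [e1 /andP[v1a v1b]] := iter_inv r ht1.
have [e2 /andP[v2a v2b]] := iter_inv r ht2.
rewrite e1 e2 /=; clear e1 e2.
set lam := (4^-1) ^+ r.
set v1 := iter r g (`|x + y| / 2) in v1a v1b *.
set v2 := iter r g (`|x - y| / 2) in v2a v2b *.
have hl : 0 <= lam by rewrite exprn_ge0 // invr_ge0 ler0n.
have hsq : (`|x + y| / 2) ^+ 2 - (`|x - y| / 2) ^+ 2 = x * y.
  by rewrite !expr_div_n !(real_normK (num_real _)) !expr2; field.
have [h1a h1b] : 0 <= v1 - v1 ^+ 2 /\ v1 - v1 ^+ 2 <= 4^-1.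
  have := sqr_ge0 (v1 - 2^-1); rewrite !expr2 => hh; split; [nra | lra].
have b1 : 0 <= lam * (v1 - v1 ^+ 2) <= lam * 4^-1.
  by apply/andP; split; [apply: mulr_ge0 | apply: ler_wpM2l].
have [h2a h2b] : 0 <= v2 - v2 ^+ 2 /\ v2 - v2 ^+ 2 <= 4^-1.
  have := sqr_ge0 (v2 - 2^-1); rewrite !expr2 => hh; split; [nra | lra].
have b2 : 0 <= lam * (v2 - v2 ^+ 2) <= lam * 4^-1.
  by apply/andP; split; [apply: mulr_ge0 | apply: ler_wpM2l].

have -> : (`|x + y| / 2) ^+ 2 + lam * (v1 - v1 ^+ 2) - ((`|x - y| / 2) ^+ 2 + lam * (v2 - v2 ^+ 2)) - x * y
  = lam * (v1 - v1 ^+ 2) - lam * (v2 - v2 ^+ 2) by rewrite -hsq; ring.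
move: b1 b2; generalize (lam * (v1 - v1 ^+ 2)) (lam * (v2 - v2 ^+ 2)) => a b.
move=> /andP[a1 a2] /andP[b1 b2].
rewrite ler_norml; apply/andP; split; lra.
Qed.

Lemma bound_conv r : (4^-1 : R) ^+ r * 4^-1 <= 6 * 2 ^- (2 * r.+1).
Proof.
have -> : (4^-1 : R) ^+ r * 4^-1 = 2 ^- (2 * r.+1).
  rewrite -exprSr exprVn exprM.
  by congr (_ ^+ _)^-1; rewrite expr2 -natrM.
have : (0 : R) <= 2 ^- (2 * r.+1) by rewrite invr_ge0 exprn_ge0 // ler0n.
lra.
Qed.

Lemma hw_half c : half_weight (hw c).
Proof. by case: c => [|[|[|c]]]; rewrite /half_weight /=; tauto. Qed.

Lemma mxN_half p q f : (forall i j, half_weight (f i j)) -> mx_all (@half_weight R) (mxN p q f).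
Proof. by move=> h i j; rewrite mxE. Qed.
Lemma colN_half p f : (forall i, half_weight (f i)) -> mx_all (@half_weight R) (colN p f).
Proof. by move=> h i j; rewrite mxE. Qed.
Lemma half0 : half_weight (0 : R).
Proof. by left. Qed.

Lemma iterN_weights m : net_weights_in (@half_weight R) (iterN m).
Proof.
elim: m => [|m IH] /=.
  split; [apply: mxN_half => i j; exact: hw_half | apply: colN_half => i; exact: half0].
split => //; [apply: mxN_half => i j; exact: hw_half | apply: colN_half => i; exact: half0 |].
split => //; [apply: mxN_half => i j; exact: hw_half | apply: colN_half => i; exact: half0].
Qed.

Lemma net_weights m : net_weights_in (@half_weight R) (net m).
Proof.
split; [apply: mxN_half => i j; exact: hw_half | apply: colN_half => i; exact: hw_half |].
split; [apply: mxN_half => i j; exact: hw_half | apply: colN_half => i; exact: half0 |].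
exact: iterN_weights.
Qed.

Lemma nnz_le p q (A : 'M[R]_(p, q)) : (mx_nnz A <= p * q)%N.
Proof. by rewrite /mx_nnz; apply: leq_trans (max_card _) _; rewrite card_prod !card_ord. Qed.

Lemma iterN_depth m : net_depth (iterN m) = (2 * m + 2)%N.
Proof. elim: m => [|m IH] //=; rewrite IH; lia. Qed.

Lemma iterN_width m : (net_width (iterN m) <= 18)%N.
Proof. elim: m => [|m IH] //=; lia. Qed.

Lemma iterN_nw m : (net_nweights (iterN m) <= 9 + 314 * m)%N.
Proof.
elim: m => [|m IH] /=.
  by have := nnz_le WO; have := nnz_le z1; lia.
have := nnz_le WB; have := nnz_le z18; have := nnz_le WA; have := nnz_le z8; lia.
Qed.

End S.

Unset Implicit Arguments.

Theorem proposition2 (R : realType) :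
  exists C : nat, forall r : nat, (0 < r)%N ->
  exists N : relu_net R 2 1,
    [/\ net_weights_in (@half_weight R) N,
        (forall x y : R, x = 0 \/ y = 0 -> net_fun2 N x y = 0),
        (forall x y : R, -1 <= x <= 1 -> -1 <= y <= 1 ->
           `|net_fun2 N x y - x * y| <= 6 * (2 ^- (2 * r.+1)))
      & [/\ (net_depth N <= C * r)%N,
            (net_width N <= C)%N &
            (net_nweights N <= C * r)%N]].
Proof.
exists 500%N => r hr; exists (net R r); split.
- exact: net_weights.
- move=> x y [->|->]; rewrite net_funE.
    by rewrite add0r sub0r /T0 normrN subrr.
  by rewrite addr0 subr0 subrr.
- move=> x y hx hy; apply: le_trans (err_bound r hx hy) _; exact: bound_conv.
- split.
  + rewrite /= iterN_depth; lia.
  + rewrite /= geq_max /= geq_max /=; have := iterN_width R r; lia.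
  + rewrite /=; have := iterN_nw R r.
    have := nnz_le (WH R); have := nnz_le (bH R); have := nnz_le (WA0 R); have := nnz_le (z8 R).
    lia.
Qed.
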